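(* Let $(G_1,v_1)$ and $(G_2,v_2)$ be connected graphs with distinguished vertices whose path metrics are conditionally strictly negative definite. Then the path metric on the free product graph $G_1\ast G_2$ is conditionally strictly negative definite.
   Context: For rooted graphs $G_i=(V_i,E_i)$ with roots $v_i$ ($i=1,2$), the free product $G_1\ast G_2$ has vertex set consisting of the empty word $e$ and all words $s_1s_2\cdots s_m$ ($m\geq1$) with $s_k\in V_{i_k}\setminus\{v_{i_k}\}$ and $i_k\neq i_{k+1}$ for all $k$. Its edges are the pairs $\{wu,w'u\}$ where $\{w,w'\}\in E_i$ for some $i$, $u$ is such a word (possibly empty) whose first letter does not lie in $V_i$, and where $wu$ (resp. $w'u$) is read as $u$ if $w=v_i$ (resp. $w'=v_i$). The path metric of a connected graph is the shortest-path distance on its vertex set. A symmetric real function $K$ on $V\times V$ is conditionally strictly negative definite if for every finitely supported $\lambda\colon V\to\mathbb{C}$, $\lambda\neq0$, with $\sum_v\lambda(v)=0$ one has $\sum_{x,y}\lambda(x)\overline{\lambda(y)}K(x,y)<0$. *)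

(* Defs.v *)
From Stdlib Require Import Reals List ClassicalEpsilon.
From Coquelicot Require Import Coquelicot.
Import ListNotations.
Open Scope R_scope.

Definition symmetric_rel {V : Type} (adj : V -> V -> Prop) : Prop :=
  forall x y, adj x y -> adj y x.

Inductive walk {V : Type} (adj : V -> V -> Prop) : V -> V -> nat -> Prop :=
  | walk_nil : forall x, walk adj x x 0
  | walk_cons : forall x y z n, adj x y -> walk adj y z n -> walk adj x z (S n).

Definition connected {V : Type} (adj : V -> V -> Prop) : Prop :=
  forall x y, exists n, walk adj x y n.

Definition is_dist {V : Type} (adj : V -> V -> Prop) (x y : V) (d : nat) : Prop :=
  walk adj x y d /\ forall m, walk adj x y m -> (d <= m)%nat.

Definition path_metric {V : Type} (adj : V -> V -> Prop) (x y : V) : R :=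
  INR (epsilon (inhabits 0%nat) (is_dist adj x y)).

Definition csum {V : Type} (s : list V) (f : V -> C) : C :=
  fold_right (fun v acc => Cplus (f v) acc) (RtoC 0) s.

Definition cond_strict_neg_def {V : Type} (K : V -> V -> R) : Prop :=
  (forall x y, K x y = K y x) /\
  forall (lam : V -> C) (s : list V),
    NoDup s ->
    (forall v, ~ In v s -> lam v = RtoC 0) ->
    (exists v, lam v <> RtoC 0) ->
    csum s lam = RtoC 0 ->
    exists r : R, r < 0 /\
      csum s (fun x => csum s (fun y => Cmult (Cmult (lam x) (Cconj (lam y))) (RtoC (K x y))))
      = RtoC r.

Section FreeProduct.
Context {V1 V2 : Type} (adj1 : V1 -> V1 -> Prop) (adj2 : V2 -> V2 -> Prop)
        (v1 : V1) (v2 : V2).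

Definition letter_ok (a : V1 + V2) : Prop :=
  match a with inl x => x <> v1 | inr y => y <> v2 end.

Definition same_side (a b : V1 + V2) : Prop :=
  match a, b with
  | inl _, inl _ => True
  | inr _, inr _ => True
  | _, _ => False
  end.

Definition reduced (w : list (V1 + V2)) : Prop :=
  List.Forall letter_ok w /\
  forall k a b, nth_error w k = Some a -> nth_error w (S k) = Some b -> ~ same_side a b.

Definition fp_vertex : Type := { w : list (V1 + V2) | reduced w }.

Definition no_head_left (u : list (V1 + V2)) : Prop :=
  match u with inl _ :: _ => False | _ => True end.
Definition no_head_right (u : list (V1 + V2)) : Prop :=
  match u with inr _ :: _ => False | _ => True end.

Definition prepend_left (w : V1) (u x : list (V1 + V2)) : Prop :=
  (w = v1 /\ x = u) \/ (w <> v1 /\ x = inl w :: u).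
Definition prepend_right (w : V2) (u x : list (V1 + V2)) : Prop :=
  (w = v2 /\ x = u) \/ (w <> v2 /\ x = inr w :: u).

Definition fp_adj (x y : fp_vertex) : Prop :=
  (exists (w w' : V1) (u : list (V1 + V2)),
      adj1 w w' /\ reduced u /\ no_head_left u /\
      prepend_left w u (proj1_sig x) /\ prepend_left w' u (proj1_sig y)) \/
  (exists (w w' : V2) (u : list (V1 + V2)),
      adj2 w w' /\ reduced u /\ no_head_right u /\
      prepend_right w u (proj1_sig x) /\ prepend_right w' u (proj1_sig y)).

End FreeProduct.

(* Main.v *)
Require Import Defs.
From Stdlib Require Import Reals List ClassicalEpsilon.
From Coquelicot Require Import Coquelicot.
From Stdlib Require Import Classical Lia Lra FunctionalExtensionality.
Import ListNotations.
Open Scope R_scope.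

Section Gen.
Variable V : Type.
Variable adj : V -> V -> Prop.

Lemma walk_app x y z n k : walk adj x y n -> walk adj y z k -> walk adj x z (n + k).
Proof.
  induction 1; intros; simpl; auto. econstructor; eauto.
Qed.

Lemma walk_one x y : adj x y -> walk adj x y 1.
Proof. intro; econstructor; eauto; constructor. Qed.

Lemma walk_rev (sym : symmetric_rel adj) x y n : walk adj x y n -> walk adj y x n.
Proof.
  induction 1. constructor.
  replace (S n) with (n + 1)%nat by lia. eapply walk_app; eauto. apply walk_one; auto.
Qed.

Definition D (x y : V) : nat := epsilon (inhabits 0%nat) (is_dist adj x y).

Lemma is_dist_ex x y n : walk adj x y n -> exists d, is_dist adj x y d.
Proof.
  induction n as [n IH] using (well_founded_induction Wf_nat.lt_wf). intro W.
  destruct (classic (forall m, walk adj x y m -> (n <= m)%nat)) as [H|H].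
  - exists n; split; auto.
  - apply not_all_ex_not in H. destruct H as [m Hm].
    apply imply_to_and in Hm. destruct Hm as [Wm Hm]. apply (IH m); auto. lia.
Qed.

Lemma D_spec x y : connected adj -> is_dist adj x y (D x y).
Proof.
  intro C. destruct (C x y) as [n W]. unfold D. apply epsilon_spec. eapply is_dist_ex; eauto.
Qed.

Lemma is_dist_unique x y a b : is_dist adj x y a -> is_dist adj x y b -> a = b.
Proof. intros [Wa Ha] [Wb Hb]. specialize (Ha _ Wb); specialize (Hb _ Wa); lia. Qed.

Lemma D_unique x y d : is_dist adj x y d -> D x y = d.
Proof.
  intro H. unfold D. apply (is_dist_unique x y); auto. apply epsilon_spec. eauto.
Qed.

Lemma path_metric_D x y : path_metric adj x y = INR (D x y).
Proof. reflexivity. Qed.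

Hypothesis sym : symmetric_rel adj.
Hypothesis conn : connected adj.

Lemma D_walk x y : walk adj x y (D x y).
Proof. apply D_spec; auto. Qed.
Lemma D_min x y n : walk adj x y n -> (D x y <= n)%nat.
Proof. apply D_spec; auto. Qed.
Lemma D_refl x : D x x = 0%nat.
Proof. pose proof (D_min x x 0 (walk_nil _ x)). lia. Qed.
Lemma D_sym x y : D x y = D y x.
Proof.
  pose proof (D_min y x _ (walk_rev sym _ _ _ (D_walk x y))).
  pose proof (D_min x y _ (walk_rev sym _ _ _ (D_walk y x))). lia.
Qed.
Lemma D_tri x y z : (D x z <= D x y + D y z)%nat.
Proof. apply D_min. apply walk_app with y; apply D_walk. Qed.
Lemma D_adj x y : adj x y -> (D x y <= 1)%nat.
Proof. intro; apply D_min, walk_one; auto. Qed.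
End Gen.

Definition rs {A} (l : list A) (f : A -> R) : R := fold_right (fun a acc => f a + acc) 0 l.

Lemma rs_nil {A} (f : A -> R) : rs [] f = 0. Proof. reflexivity. Qed.
Lemma rs_cons {A} a l (f : A -> R) : rs (a :: l) f = f a + rs l f. Proof. reflexivity. Qed.

Lemma rs_ext_in {A} (l : list A) f g : (forall a, In a l -> f a = g a) -> rs l f = rs l g.
Proof. induction l; simpl; intros; auto. rewrite H, IHl; auto. Qed.
Lemma rs_ext {A} (l : list A) f g : (forall a, f a = g a) -> rs l f = rs l g.
Proof. intros; apply rs_ext_in; auto. Qed.
Lemma rs_plus {A} (l : list A) f g : rs l (fun a => f a + g a) = rs l f + rs l g.
Proof. induction l; simpl; [lra|]. rewrite IHl; lra. Qed.
Lemma rs_scal {A} (l : list A) c f : rs l (fun a => c * f a) = c * rs l f.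
Proof. induction l; simpl; [lra|]. rewrite IHl; lra. Qed.
Lemma rs_scalr {A} (l : list A) c f : rs l (fun a => f a * c) = rs l f * c.
Proof. induction l; simpl; [lra|]. rewrite IHl; lra. Qed.
Lemma rs_opp {A} (l : list A) f : rs l (fun a => - f a) = - rs l f.
Proof. induction l; simpl; [lra|]. rewrite IHl; lra. Qed.
Lemma rs_zero {A} (l : list A) : rs l (fun _ => 0) = 0.
Proof. induction l; simpl; auto. rewrite IHl; lra. Qed.
Lemma rs_swap {A B} (l : list A) (k : list B) f :
  rs l (fun a => rs k (fun b => f a b)) = rs k (fun b => rs l (fun a => f a b)).
Proof.
  induction l; simpl. symmetry; apply rs_zero.
  rewrite IHl, <- rs_plus. reflexivity.
Qed.
Lemma rs_map {A B} (l : list A) (g : A -> B) f : rs (map g l) f = rs l (fun a => f (g a)).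
Proof. induction l; simpl; auto. rewrite IHl; auto. Qed.
Lemma rs_nonpos {A} (l : list A) f : (forall a, In a l -> f a <= 0) -> rs l f <= 0.
Proof.
  induction l; simpl; intros; [lra|]. pose proof (H a (or_introl eq_refl)).
  assert (rs l f <= 0) by (apply IHl; auto). lra.
Qed.
Lemma rs_nonpos_zero {A} (l : list A) f : (forall a, In a l -> f a <= 0) -> rs l f = 0 ->
  forall a, In a l -> f a = 0.
Proof.
  induction l; simpl; intros H E b Hb; [contradiction|].
  pose proof (H a (or_introl eq_refl)).
  assert (rs l f <= 0) by (apply rs_nonpos; auto).
  destruct Hb as [<-|Hb]. lra. apply IHl; auto. lra.
Qed.
Lemma rs_prod {A B} (l : list A) (k : list B) f g :
  rs l (fun a => rs k (fun b => f a * g b)) = rs l f * rs k g.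
Proof.
  rewrite <- rs_scalr. apply rs_ext. intro a. apply rs_scal.
Qed.

Definition dec {X} (x y : X) := excluded_middle_informative (x = y).

Lemma rs_ind {A} (L : list A) (y : A) (g : A -> R) : NoDup L -> In y L ->
  rs L (fun a => if dec a y then g a else 0) = g y.
Proof.
  induction 1; simpl; intros; [contradiction|].
  destruct (dec x y) as [->|n].
  - rewrite (rs_ext_in l _ (fun _ => 0)). rewrite rs_zero; lra.
    intros a Ha. destruct (dec a y); subst; auto; contradiction.
  - destruct H1 as [->|H1]; [congruence|]. rewrite IHNoDup; auto; lra.
Qed.
Lemma rs_ind_out {A} (L : list A) (y : A) (g : A -> R) : ~ In y L ->
  rs L (fun a => if dec a y then g a else 0) = 0.
Proof.
  intro H. rewrite (rs_ext_in L _ (fun _ => 0)). apply rs_zero.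
  intros a Ha. destruct (dec a y); subst; auto; contradiction.
Qed.

Definition mass {X} (m : list (X * R)) := rs m snd.
Definition Qf {X} (K : X -> X -> R) (m : list (X * R)) :=
  rs m (fun p => rs m (fun q => snd p * snd q * K (fst p) (fst q))).
Definition dens {X} (m : list (X * R)) (v : X) :=
  rs m (fun p => if dec (fst p) v then snd p else 0).
Definition nzero {X} (m : list (X * R)) := forall v, dens m v = 0.

Lemma dens_out {X} (m : list (X * R)) v : ~ In v (map fst m) -> dens m v = 0.
Proof.
  intro H. unfold dens. rewrite (rs_ext_in m _ (fun _ => 0)). apply rs_zero.
  intros p Hp. destruct (dec (fst p) v); auto. exfalso; apply H; subst; apply in_map; auto.
Qed.

Lemma sum_dens {X} (m : list (X * R)) (s : list X) (f : X -> R) :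
  NoDup s -> (forall p, In p m -> In (fst p) s) ->
  rs m (fun p => snd p * f (fst p)) = rs s (fun w => dens m w * f w).
Proof.
  intros Hs. induction m as [|p m IH]; intros Hm.
  - simpl. unfold dens. simpl. rewrite (rs_ext s _ (fun _ => 0)). rewrite rs_zero; auto. intros; lra.
  - rewrite rs_cons, IH by (intros; apply Hm; simpl; auto).
    unfold dens. simpl. symmetry.
    rewrite (rs_ext s _ (fun w => (if dec w (fst p) then snd p * f w else 0) +
       rs m (fun p0 => if dec (fst p0) w then snd p0 else 0) * f w)).
    rewrite rs_plus, rs_ind; auto. apply Hm; simpl; auto.
    intro w. destruct (dec (fst p) w), (dec w (fst p)); subst; try congruence; lra.
Qed.

Definition supp {X} (m : list (X * R)) := nodup dec (map fst m).

Lemma supp_spec {X} (m : list (X * R)) : NoDup (supp m) /\ forall p, In p m -> In (fst p) (supp m).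
Proof.
  split. apply NoDup_nodup. intros. unfold supp. apply nodup_In. apply in_map; auto.
Qed.

Lemma Qf_dens {X} K (m : list (X * R)) :
  Qf K m = rs (supp m) (fun v => rs (supp m) (fun w => dens m v * dens m w * K v w)).
Proof.
  destruct (supp_spec m) as [N I]. unfold Qf.
  rewrite (rs_ext m _ (fun p => snd p * rs m (fun q => snd q * K (fst p) (fst q)))).
  2:{ intro p. rewrite <- rs_scal. apply rs_ext; intro; lra. }
  rewrite (rs_ext m (fun p => snd p * rs m _) (fun p => snd p * rs (supp m) (fun w => dens m w * K (fst p) w))).
  2:{ intro p. f_equal. apply (sum_dens m (supp m) (fun w => K (fst p) w)); auto. }
  transitivity (rs (supp m) (fun v => dens m v * rs (supp m) (fun w => dens m w * K v w))).
  apply (sum_dens m (supp m) (fun v => rs (supp m) (fun w => dens m w * K v w))); auto.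
  apply rs_ext; intro v. rewrite <- rs_scal. apply rs_ext; intro; lra.
Qed.

Lemma mass_dens {X} (m : list (X * R)) : mass m = rs (supp m) (fun v => dens m v).
Proof.
  destruct (supp_spec m) as [N I]. unfold mass.
  rewrite (rs_ext m _ (fun p => snd p * (fun _ => 1) (fst p))) by (intro; simpl; lra).
  transitivity (rs (supp m) (fun w => dens m w * (fun _ => 1) w)).
  apply (sum_dens m (supp m) (fun _ => 1)); auto. apply rs_ext; intro; lra.
Qed.

Lemma csum_fst {X} (s : list X) f : fst (csum s f) = rs s (fun x => fst (f x)).
Proof. induction s; simpl; auto. rewrite IHs; auto. Qed.
Lemma csum_snd {X} (s : list X) f : snd (csum s f) = rs s (fun x => snd (f x)).
Proof. induction s; simpl; auto. rewrite IHs; auto. Qed.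

Lemma csnd_real {X} (K : X -> X -> R) : cond_strict_neg_def K ->
  forall m, mass m = 0 -> Qf K m <= 0 /\ (Qf K m = 0 -> nzero m).
Proof.
  intros [Ks H] m Hm. destruct (supp_spec m) as [N I].
  destruct (classic (nzero m)) as [Z|Z].
  - rewrite Qf_dens. rewrite (rs_ext _ _ (fun _ => 0)). rewrite rs_zero. split; [lra|auto].
    intro v. rewrite (rs_ext _ _ (fun _ => 0)). apply rs_zero. intro w. rewrite Z. ring.
  - assert (exists v, dens m v <> 0) as [v0 Hv0].
    { apply not_all_not_ex. intro C. apply Z. intro v. specialize (C v). lra. }
    destruct (H (fun v => RtoC (dens m v)) (supp m) N) as [r [Hr E]].
    + intros v Hv. unfold RtoC. f_equal. apply dens_out. intro Hin. apply Hv.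
      unfold supp. apply nodup_In; auto.
    + exists v0. intro E. apply Hv0. unfold RtoC in E. congruence.
    + unfold RtoC at 2. apply injective_projections.
      * rewrite csum_fst. simpl. rewrite <- mass_dens. auto.
      * rewrite csum_snd. simpl. apply rs_zero.
    + assert (Qf K m = r).
      { apply (f_equal fst) in E. rewrite csum_fst in E. simpl in E.
        rewrite Qf_dens. rewrite <- E. apply rs_ext; intro v. rewrite csum_fst.
        apply rs_ext; intro w. simpl. ring. }
      split; intros; lra.
Qed.

Section FP.
Variables (V1 V2 : Type) (adj1 : V1 -> V1 -> Prop) (adj2 : V2 -> V2 -> Prop) (v1 : V1) (v2 : V2).
Hypotheses (sym1 : symmetric_rel adj1) (sym2 : symmetric_rel adj2)
  (conn1 : connected adj1) (conn2 : connected adj2).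

Notation Lt := (V1 + V2)%type.
Notation d1 := (D V1 adj1).
Notation d2 := (D V2 adj2).

Definition h (a : Lt) : nat := match a with inl w => d1 w v1 | inr z => d2 z v2 end.
Fixpoint ell (l : list Lt) : nat := match l with [] => 0%nat | a :: t => (h a + ell t)%nat end.
Definition dside (a b : Lt) : nat :=
  match a, b with
  | inl w, inl w' => d1 w w'
  | inr z, inr z' => d2 z z'
  | _, _ => (h a + h b)%nat
  end.
Fixpoint F (r r' : list Lt) : nat :=
  match r with
  | [] => ell r'
  | a :: t => match r' with
              | [] => (h a + ell t)%nat
              | b :: t' => if dec a b then F t t' else (dside a b + ell t + ell t')%nat
              end
  end.

Ltac dfacts :=
  repeat match goal with
  | |- context [d1 ?a ?b] => lazymatch goal with H : (d1 a b = d1 b a) |- _ => fail | _ => pose proof (D_sym _ _ sym1 conn1 a b) end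
  end.

Lemma F_nil_r x : F x [] = ell x.
Proof. destruct x; reflexivity. Qed.

Lemma F_app p r r' : F (p ++ r) (p ++ r') = F r r'.
Proof.
  induction p; simpl; auto. destruct (dec a a); [auto|congruence].
Qed.

Lemma d1_sym a b : d1 a b = d1 b a. Proof. apply D_sym; auto. Qed.
Lemma d2_sym a b : d2 a b = d2 b a. Proof. apply D_sym; auto. Qed.
Lemma d1_tri a b c : (d1 a c <= d1 a b + d1 b c)%nat. Proof. apply D_tri; auto. Qed.
Lemma d2_tri a b c : (d2 a c <= d2 a b + d2 b c)%nat. Proof. apply D_tri; auto. Qed.
Lemma d1_refl a : d1 a a = 0%nat. Proof. apply D_refl; auto. Qed.
Lemma d2_refl a : d2 a a = 0%nat. Proof. apply D_refl; auto. Qed.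

Lemma h_le a b : (h a <= dside a b + h b)%nat /\ (h b <= dside a b + h a)%nat.
Proof.
  destruct a as [w|z], b as [w'|z']; simpl; try lia.
  - pose proof (d1_tri w w' v1); pose proof (d1_tri w' w v1); rewrite (d1_sym w' w) in *; lia.
  - pose proof (d2_tri z z' v2); pose proof (d2_tri z' z v2); rewrite (d2_sym z' z) in *; lia.
Qed.

Lemma dside_le a b : (dside a b <= h a + h b)%nat.
Proof.
  destruct a as [w|z], b as [w'|z']; simpl; try lia.
  - pose proof (d1_tri w v1 w'); rewrite (d1_sym v1 w') in *; lia.
  - pose proof (d2_tri z v2 z'); rewrite (d2_sym v2 z') in *; lia.
Qed.

Lemma dside_tri a b c : (dside a c <= dside a b + dside b c)%nat.
Proof.
  destruct a as [a|a], b as [b|b], c as [c|c]; simpl; try apply D_tri; auto;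
  try pose proof (d1_tri a b v1); try pose proof (d1_tri a v1 c); try pose proof (d1_tri c b v1);
  try pose proof (d2_tri a b v2); try pose proof (d2_tri a v2 c); try pose proof (d2_tri c b v2);
  repeat rewrite (d1_sym v1 _) in *; repeat rewrite (d2_sym v2 _) in *;
  repeat rewrite (d1_sym c b) in *; repeat rewrite (d2_sym c b) in *; lia.
Qed.

Lemma ell_F x y : (ell x <= F x y + ell y)%nat /\ (ell y <= F x y + ell x)%nat.
Proof.
  revert y; induction x as [|a t IH]; intros [|b t']; simpl; try lia.
  destruct (dec a b) as [<-|n].
  - specialize (IH t'); lia.
  - pose proof (h_le a b). lia.
Qed.

Lemma F_le_ell x y : (F x y <= ell x + ell y)%nat.
Proof.
  revert y; induction x as [|a t IH]; intros [|b t']; simpl; try lia.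
  destruct (dec a b) as [<-|n].
  - specialize (IH t'); lia.
  - pose proof (dside_le a b). lia.
Qed.

Lemma F_tri x y z : (F x z <= F x y + F y z)%nat.
Proof.
  revert y z; induction x as [|a t IH]; intros y z.
  - simpl. destruct (ell_F y z). simpl in *. lia.
  - destruct y as [|b t'].
    + pose proof (F_le_ell (a :: t) z). rewrite F_nil_r. change (F [] z) with (ell z). lia.
    + destruct z as [|c t''].
      * rewrite !F_nil_r. destruct (ell_F (a :: t) (b :: t')). lia.
      * simpl. destruct (dec a b) as [e1|n1], (dec b c) as [e2|n2], (dec a c) as [e3|n3];
        subst; try congruence.
        -- apply IH.
        -- destruct (ell_F t t'); lia.
        -- destruct (ell_F t' t''); lia.
        -- pose proof (F_le_ell t t''). lia.
        -- pose proof (dside_tri a b c). lia.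
Qed.

Lemma F_refl x : F x x = 0%nat.
Proof. induction x; simpl; auto. destruct (dec a a); [auto|congruence]. Qed.


Lemma rs_zero_ext {A} (l : list A) f : (forall a, f a = 0) -> rs l f = 0.
Proof. intro H. rewrite (rs_ext l f (fun _ => 0)); auto. apply rs_zero. Qed.

Definition p1 (x : list Lt) : V1 := match x with inl w :: _ => w | _ => v1 end.
Definition p2 (x : list Lt) : V2 := match x with inr z :: _ => z | _ => v2 end.
Definition ind (a : Lt) (x : list Lt) : R :=
  match x with b :: _ => if dec b a then 1 else 0 | [] => 0 end.
Definition KF (x y : list Lt) : R := INR (F x y).
Definition K1 (a b : V1) : R := INR (d1 a b).
Definition K2 (a b : V2) : R := INR (d2 a b).

Definition heads (m : list (list Lt * R)) : list Lt :=
  flat_map (fun p => match fst p with b :: _ => [b] | [] => [] end) m.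
Definition LH m := nodup dec (heads m).
Definition ma (a : Lt) (m : list (list Lt * R)) :=
  map (fun p => (tl (fst p), ind a (fst p) * snd p)) m.
Definition mu a m := ([], - mass (ma a m)) :: ma a m.
Definition nu1 (m : list (list Lt * R)) := map (fun p => (p1 (fst p), snd p)) m.
Definition nu2 (m : list (list Lt * R)) := map (fun p => (p2 (fst p), snd p)) m.

Lemma LH_in m p b t : In p m -> fst p = b :: t -> In b (LH m).
Proof.
  intros Hp E. unfold LH. apply nodup_In. unfold heads. apply in_flat_map.
  exists p. rewrite E. simpl; auto.
Qed.

Lemma LH_inv m b : In b (LH m) -> exists p t, In p m /\ fst p = b :: t.
Proof.
  unfold LH, heads. rewrite nodup_In, in_flat_map. intros [p [Hp Hb]].
  destruct (fst p) as [|c t] eqn:E; simpl in Hb; [contradiction|].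
  destruct Hb as [<-|[]]. exists p, t; auto.
Qed.

Lemma ind_pair L0 x y G : NoDup L0 -> (forall b t, x = b :: t -> In b L0) ->
  rs L0 (fun a => ind a x * ind a y * G) =
  match x, y with b :: _, c :: _ => if dec b c then G else 0 | _, _ => 0 end.
Proof.
  intros N Hx. destruct x as [|b t].
  - simpl. apply rs_zero_ext; intro; ring.
  - destruct y as [|c t'].
    + simpl. apply rs_zero_ext; intro; ring.
    + simpl. destruct (dec b c) as [<-|n].
      * transitivity (rs L0 (fun a => if dec a b then G else 0)).
        apply rs_ext; intro a. destruct (dec b a), (dec a b); subst; try congruence; ring.
        apply (rs_ind L0 b (fun _ => G)); auto. eapply Hx; eauto.
      * apply rs_zero_ext; intro a.
        destruct (dec b a), (dec c a); subst; try congruence; ring.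
Qed.

Lemma F_decomp L0 x y : NoDup L0 -> (forall b t, x = b :: t -> In b L0) ->
  KF x y = K1 (p1 x) (p1 y) + K2 (p2 x) (p2 y) + INR (ell (tl x)) + INR (ell (tl y))
    + rs L0 (fun a => ind a x * ind a y * (KF (tl x) (tl y) - INR (ell (tl x)) - INR (ell (tl y)))).
Proof.
  intros N Hx. rewrite ind_pair; auto. unfold KF, K1, K2.
  destruct x as [|b t], y as [|c t']; simpl.
  - rewrite !d1_refl, !d2_refl. simpl. lra.
  - destruct c as [w|z]; simpl; rewrite ?d1_refl, ?d2_refl, ?plus_INR;
      rewrite ?(d1_sym v1), ?(d2_sym v2); simpl; lra.
  - destruct b as [w|z]; simpl; rewrite ?d1_refl, ?d2_refl, ?plus_INR; simpl; lra.
  - destruct (dec b c) as [<-|n].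
    + rewrite !d1_refl, !d2_refl. simpl. lra.
    + destruct b as [w|z], c as [w'|z']; simpl; rewrite ?d1_refl, ?d2_refl, ?plus_INR;
        rewrite ?(d1_sym v1), ?(d2_sym v2); simpl; lra.
Qed.

Lemma rs2_plus {A B} (l : list A) (k : list B) f g :
  rs l (fun p => rs k (fun q => f p q + g p q)) =
  rs l (fun p => rs k (fun q => f p q)) + rs l (fun p => rs k (fun q => g p q)).
Proof.
  rewrite <- rs_plus. apply rs_ext; intro; apply rs_plus.
Qed.

Lemma rs2_ext {A B} (l : list A) (k : list B) f g : (forall p q, f p q = g p q) ->
  rs l (fun p => rs k (fun q => f p q)) = rs l (fun p => rs k (fun q => g p q)).
Proof. intros; apply rs_ext; intro; apply rs_ext; auto. Qed.

Lemma mass_ma a m : mass (ma a m) = rs m (fun p => ind a (fst p) * snd p).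
Proof. unfold mass, ma. rewrite rs_map. reflexivity. Qed.

Lemma Q_mu a m : Qf KF (mu a m) =
  rs m (fun p => rs m (fun q => snd p * snd q * (ind a (fst p) * ind a (fst q) *
     (KF (tl (fst p)) (tl (fst q)) - INR (ell (tl (fst p))) - INR (ell (tl (fst q))))))).
Proof.
  unfold Qf, mu. rewrite rs_cons. simpl fst. simpl snd. rewrite rs_cons. simpl fst; simpl snd.
  rewrite mass_ma. unfold ma. rewrite !rs_map. simpl.
  set (al := rs m (fun p => ind a (fst p) * snd p)).
  rewrite (rs_ext m (fun a0 => _ + rs (map _ m) _)
     (fun p => ind a (fst p) * snd p * (- al) * KF (tl (fst p)) [] +
               rs m (fun q => ind a (fst p) * snd p * (ind a (fst q) * snd q) * KF (tl (fst p)) (tl (fst q))))).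
  2:{ intro p. rewrite rs_map. simpl. f_equal. }
  rewrite rs_plus.
  set (S1 := rs m (fun p => ind a (fst p) * snd p * INR (ell (tl (fst p))))).
  assert (E1 : rs m (fun p => ind a (fst p) * snd p * - al * KF (tl (fst p)) []) = - al * S1).
  { unfold S1. rewrite <- rs_scal. apply rs_ext; intro p. unfold KF. rewrite F_nil_r. ring. }
  assert (E2 : rs m (fun q => - al * (ind a (fst q) * snd q) * KF [] (tl (fst q))) = - al * S1).
  { unfold S1. rewrite <- rs_scal. apply rs_ext; intro p. unfold KF. simpl. ring. }
  rewrite E1, E2. replace (KF [] []) with 0 by (unfold KF; simpl; auto). symmetry.
  rewrite (rs2_ext m m _ (fun p q =>
     ind a (fst p) * snd p * (ind a (fst q) * snd q) * KF (tl (fst p)) (tl (fst q)) +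
     ((- (ind a (fst p) * snd p * INR (ell (tl (fst p))))) * (ind a (fst q) * snd q) +
     (- (ind a (fst p) * snd p)) * (ind a (fst q) * snd q * INR (ell (tl (fst q))))))).
  2:{ intros; ring. }
  rewrite !rs2_plus, !rs_prod, !rs_opp. fold al. fold S1. ring.
Qed.

Lemma Q_decomp m : mass m = 0 ->
  Qf KF m = Qf K1 (nu1 m) + Qf K2 (nu2 m) + rs (LH m) (fun a => Qf KF (mu a m)).
Proof.
  intro M. assert (N : NoDup (LH m)) by apply NoDup_nodup.
  unfold Qf at 1.
  rewrite (rs_ext_in m _ (fun p => rs m (fun q =>
     snd p * snd q * K1 (p1 (fst p)) (p1 (fst q)) +
     snd p * snd q * K2 (p2 (fst p)) (p2 (fst q)) +
     (snd p * INR (ell (tl (fst p)))) * snd q +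
     snd p * (snd q * INR (ell (tl (fst q)))) +
     rs (LH m) (fun a => snd p * snd q * (ind a (fst p) * ind a (fst q) *
       (KF (tl (fst p)) (tl (fst q)) - INR (ell (tl (fst p))) - INR (ell (tl (fst q))))))))).
  2:{ intros p Hp. apply rs_ext; intro q. rewrite (F_decomp (LH m)); auto.
      2:{ intros b t E. eapply LH_in; eauto. }
      rewrite rs_scal. ring. }
  rewrite !rs2_plus, !rs_prod. fold (mass m). rewrite M.
  rewrite (rs_ext (LH m) _ _ (fun a => Q_mu a m)).
  unfold Qf, nu1, nu2. rewrite !rs_map.
  rewrite (rs_ext m (fun p => rs (map _ m) _) (fun p => rs m (fun q => snd p * snd q * K1 (p1 (fst p)) (p1 (fst q)))))
    by (intro; rewrite rs_map; reflexivity).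
  rewrite (rs_ext m (fun p => rs (map _ m) _) (fun p => rs m (fun q => snd p * snd q * K2 (p2 (fst p)) (p2 (fst q)))))
    by (intro; rewrite rs_map; reflexivity).
  simpl.
  rewrite (rs_ext m (fun p => rs m (fun q => rs (LH m) _)) (fun p => rs (LH m) (fun a => rs m (fun q =>
     snd p * snd q * (ind a (fst p) * ind a (fst q) *
       (KF (tl (fst p)) (tl (fst q)) - INR (ell (tl (fst p))) - INR (ell (tl (fst q))))))))).
  2:{ intro p. apply rs_swap. }
  rewrite (rs_swap m (LH m)). ring.
Qed.

Definition okl (x : list Lt) := List.Forall (letter_ok v1 v2) x.

Lemma alpha_zero m (N1 : nzero (nu1 m)) (N2 : nzero (nu2 m)) :
  (forall p, In p m -> okl (fst p)) -> forall b, In b (LH m) -> mass (ma b m) = 0.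
Proof.
  intros OK b Hb. destruct (LH_inv m b Hb) as [p [t [Hp E]]].
  pose proof (OK p Hp) as Ok. rewrite E in Ok. apply List.Forall_inv in Ok.
  rewrite mass_ma. destruct b as [w|z]; simpl in Ok.
  - rewrite <- (N1 w). unfold dens, nu1. rewrite rs_map. apply rs_ext; intro q. simpl.
    destruct (fst q) as [|[w'|z'] t']; simpl.
    + destruct (dec v1 w); [congruence|ring].
    + destruct (dec (@inl V1 V2 w') (inl w)), (dec w' w); subst; try congruence; ring.
    + destruct (dec (@inr V1 V2 z') (inl w)), (dec v1 w); subst; try congruence; ring.
  - rewrite <- (N2 z). unfold dens, nu2. rewrite rs_map. apply rs_ext; intro q. simpl.
    destruct (fst q) as [|[w'|z'] t']; simpl.
    + destruct (dec v2 z); [congruence|ring].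
    + destruct (dec (@inl V1 V2 w') (inr z)), (dec v2 z); subst; try congruence; ring.
    + destruct (dec (@inr V1 V2 z') (inr z)), (dec z' z); subst; try congruence; ring.
Qed.

Lemma step m (cs1 : cond_strict_neg_def K1) (cs2 : cond_strict_neg_def K2) :
  (forall p, In p m -> okl (fst p)) -> mass m = 0 ->
  (forall a, In a (LH m) -> Qf KF (mu a m) <= 0 /\ (Qf KF (mu a m) = 0 -> nzero (mu a m))) ->
  Qf KF m <= 0 /\ (Qf KF m = 0 -> nzero m).
Proof.
  intros OK M IH.
  assert (M1 : mass (nu1 m) = 0) by (unfold mass, nu1; rewrite rs_map; exact M).
  assert (M2 : mass (nu2 m) = 0) by (unfold mass, nu2; rewrite rs_map; exact M).
  destruct (csnd_real K1 cs1 _ M1) as [A1 B1].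
  destruct (csnd_real K2 cs2 _ M2) as [A2 B2].
  assert (S : rs (LH m) (fun a => Qf KF (mu a m)) <= 0) by (apply rs_nonpos; intros; apply IH; auto).
  rewrite Q_decomp by auto. split; [lra|]. intro E.
  assert (Z1 : Qf K1 (nu1 m) = 0) by lra.
  assert (Z2 : Qf K2 (nu2 m) = 0) by lra.
  assert (ZS : rs (LH m) (fun a => Qf KF (mu a m)) = 0) by lra.
  pose proof (rs_nonpos_zero _ _ (fun a Ha => proj1 (IH a Ha)) ZS) as Za.
  pose proof (B1 Z1) as N1. pose proof (B2 Z2) as N2.
  pose proof (alpha_zero m N1 N2 OK) as AZ.
  assert (ND : NoDup (LH m)) by apply NoDup_nodup.
  intro v. destruct v as [|b t].
  - assert (mass m = dens m [] + rs (LH m) (fun a => mass (ma a m))).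
    { rewrite (rs_ext (LH m) _ _ (fun a => mass_ma a m)). rewrite rs_swap.
      unfold dens, mass. rewrite <- rs_plus. apply rs_ext_in. intros p Hp.
      destruct (fst p) as [|b t] eqn:Ep.
      + destruct (dec (@nil Lt) []); [|congruence]. rewrite rs_zero_ext. ring.
        intro a. simpl. ring.
      + destruct (dec (b :: t) []); [congruence|].
        transitivity (rs (LH m) (fun a => if dec a b then snd p else 0)).
        rewrite rs_ind; [reflexivity|exact ND|eapply LH_in; eauto].
        rewrite Rplus_0_l. apply rs_ext; intro a. simpl.
        destruct (dec a b), (dec b a); subst; try congruence; ring. }
    rewrite (rs_ext_in (LH m) _ (fun _ => 0)) in H by (intros; apply AZ; auto).
    rewrite rs_zero in H. lra.
  - destruct (classic (In b (LH m))) as [Hb|Hb].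
    + assert (dens m (b :: t) = dens (ma b m) t).
      { unfold dens, ma. rewrite rs_map. apply rs_ext; intro p. simpl.
        destruct (fst p) as [|c t']; simpl.
        * destruct (dec (@nil Lt) (b :: t)), (dec (@nil Lt) t); try congruence; ring.
        * destruct (dec (c :: t') (b :: t)) as [e|n], (dec t' t), (dec c b); subst;
            try congruence; try ring; inversion e; congruence. }
      rewrite H. pose proof (proj2 (IH b Hb) (Za b Hb) t) as Dm.
      unfold dens at 1, mu in Dm. rewrite rs_cons in Dm. simpl in Dm. rewrite AZ in Dm by auto.
      fold (dens (ma b m) t) in Dm. destruct (dec (@nil Lt) t); lra.
    + apply dens_out. intro Hin. apply in_map_iff in Hin. destruct Hin as [p [Ep Hp]].
      apply Hb. eapply LH_in; eauto.
Qed.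

Lemma core (cs1 : cond_strict_neg_def K1) (cs2 : cond_strict_neg_def K2) n : forall m,
  (forall p, In p m -> (length (fst p) <= n)%nat /\ okl (fst p)) -> mass m = 0 ->
  Qf KF m <= 0 /\ (Qf KF m = 0 -> nzero m).
Proof.
  induction n; intros m G M; apply step; auto; try (intros; apply G; auto); intros a Ha.
  - destruct (LH_inv m a Ha) as [p [t [Hp E]]]. destruct (G p Hp) as [Hl _].
    rewrite E in Hl. simpl in Hl. lia.
  - apply IHn.
    + intros p Hp. destruct Hp as [<-|Hp].
      * simpl. split; [lia|constructor].
      * unfold ma in Hp. apply in_map_iff in Hp. destruct Hp as [q [<- Hq]].
        destruct (G q Hq) as [Hl Ok]. simpl.
        destruct (fst q) as [|c t]; simpl in *; split; try lia; try constructor.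
        inversion Ok; auto.
    + unfold mu, mass at 1. rewrite rs_cons. fold (mass (ma a m)). simpl. lra.
Qed.

Notation red := (reduced v1 v2).
Notation FA := (fp_adj adj1 adj2 v1 v2).

Lemma R_cons_inv a l : red (a :: l) ->
  letter_ok v1 v2 a /\ red l /\ (forall b, nth_error l 0 = Some b -> ~ same_side a b).
Proof.
  intros [Fa Hn]. inversion Fa; subst. split; auto. split.
  - split; auto. intros k x y E1 E2. apply (Hn (S k)); auto.
  - intros b E. apply (Hn 0%nat); auto.
Qed.

Lemma R_cons a l : letter_ok v1 v2 a -> red l -> (forall b, nth_error l 0 = Some b -> ~ same_side a b) ->
  red (a :: l).
Proof.
  intros Ha [Fl Hl] Hh. split. constructor; auto.
  intros [|k] x y E1 E2; simpl in *.
  - inversion E1; subst. apply Hh; auto.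
  - eapply Hl; eauto.
Qed.

Lemma R_app_r l1 l2 : red (l1 ++ l2) -> red l2.
Proof. induction l1; simpl; auto. intro H. apply R_cons_inv in H. apply IHl1; apply H. Qed.

Definition pl1 (w : V1) (u : list Lt) : list Lt := if dec w v1 then u else inl w :: u.
Definition pl2 (z : V2) (u : list Lt) : list Lt := if dec z v2 then u else inr z :: u.

Lemma pl1_red w u : red u -> no_head_left u -> red (pl1 w u).
Proof.
  intros Ru Nu. unfold pl1. destruct (dec w v1); auto. apply R_cons; auto.
  intros b E. destruct u as [|c u]; simpl in E; [discriminate|]. inversion E; subst.
  destruct b; simpl in *; tauto.
Qed.
Lemma pl2_red z u : red u -> no_head_right u -> red (pl2 z u).
Proof.
  intros Ru Nu. unfold pl2. destruct (dec z v2); auto. apply R_cons; auto.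
  intros b E. destruct u as [|c u]; simpl in E; [discriminate|]. inversion E; subst.
  destruct b; simpl in *; tauto.
Qed.
Lemma pl1_prep w u : prepend_left v1 w u (pl1 w u).
Proof. unfold pl1, prepend_left. destruct (dec w v1); auto. Qed.
Lemma pl2_prep z u : prepend_right v2 z u (pl2 z u).
Proof. unfold pl2, prepend_right. destruct (dec z v2); auto. Qed.

Definition W (l l' : list Lt) (n : nat) : Prop :=
  forall H H', walk FA (exist _ l H) (exist _ l' H') n.

Lemma W_refl l : W l l 0.
Proof. intros H H'. rewrite (proof_irrelevance _ H H'). constructor. Qed.

Lemma W_trans l m l' n k : W l m n -> W m l' k -> red m -> W l l' (n + k).
Proof. intros A B Hm H H'. apply walk_app with (exist _ m Hm); auto. Qed.

Lemma FA_sym : symmetric_rel FA.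
Proof.
  intros x y [[w [w' [u [A [Ru [Nu [Px Py]]]]]]]|[w [w' [u [A [Ru [Nu [Px Py]]]]]]]].
  - left. exists w', w, u. exact (conj (sym1 _ _ A) (conj Ru (conj Nu (conj Py Px)))).
  - right. exists w', w, u. exact (conj (sym2 _ _ A) (conj Ru (conj Nu (conj Py Px)))).
Qed.

Lemma W_sym l l' n : W l l' n -> W l' l n.
Proof. intros A H H'. apply walk_rev. apply FA_sym. apply A. Qed.

Lemma lift1 w w' n u : walk adj1 w w' n -> red u -> no_head_left u -> W (pl1 w u) (pl1 w' u) n.
Proof.
  intros Wk Ru Nu. induction Wk as [x|x y z n A Wk IH]; intros H H'.
  - rewrite (proof_irrelevance _ H H'). constructor.
  - apply walk_cons with (exist _ (pl1 y u) (pl1_red y u Ru Nu)); [|apply IH].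
    left. exists x, y, u. exact (conj A (conj Ru (conj Nu (conj (pl1_prep _ _) (pl1_prep _ _))))).
Qed.
Lemma lift2 w w' n u : walk adj2 w w' n -> red u -> no_head_right u -> W (pl2 w u) (pl2 w' u) n.
Proof.
  intros Wk Ru Nu. induction Wk as [x|x y z n A Wk IH]; intros H H'.
  - rewrite (proof_irrelevance _ H H'). constructor.
  - apply walk_cons with (exist _ (pl2 y u) (pl2_red y u Ru Nu)); [|apply IH].
    right. exists x, y, u. exact (conj A (conj Ru (conj Nu (conj (pl2_prep _ _) (pl2_prep _ _))))).
Qed.

Lemma nhl a u : red (inl a :: u) -> no_head_left u.
Proof.
  intro H. apply R_cons_inv in H. destruct H as [_ [_ H]]. destruct u as [|[b|b] u]; simpl; auto.
  apply (H (inl b)); simpl; auto.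
Qed.
Lemma nhr a u : red (inr a :: u) -> no_head_right u.
Proof.
  intro H. apply R_cons_inv in H. destruct H as [_ [_ H]]. destruct u as [|[b|b] u]; simpl; auto.
  apply (H (inr b)); simpl; auto.
Qed.

Lemma tile_move1 w w' u : red (inl w :: u) -> red (inl w' :: u) -> W (inl w :: u) (inl w' :: u) (d1 w w').
Proof.
  intros H1 H2. pose proof (R_cons_inv _ _ H1) as [O1 [Ru _]]. pose proof (R_cons_inv _ _ H2) as [O2 _].
  simpl in O1, O2.
  replace (inl w :: u) with (pl1 w u) by (unfold pl1; destruct (dec w v1); congruence).
  replace (inl w' :: u) with (pl1 w' u) by (unfold pl1; destruct (dec w' v1); congruence).
  apply lift1; auto. apply D_walk; auto. eapply nhl; eauto.
Qed.
Lemma tile_move2 w w' u : red (inr w :: u) -> red (inr w' :: u) -> W (inr w :: u) (inr w' :: u) (d2 w w').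
Proof.
  intros H1 H2. pose proof (R_cons_inv _ _ H1) as [O1 [Ru _]]. pose proof (R_cons_inv _ _ H2) as [O2 _].
  simpl in O1, O2.
  replace (inr w :: u) with (pl2 w u) by (unfold pl2; destruct (dec w v2); congruence).
  replace (inr w' :: u) with (pl2 w' u) by (unfold pl2; destruct (dec w' v2); congruence).
  apply lift2; auto. apply D_walk; auto. eapply nhr; eauto.
Qed.

Lemma down a u : red (a :: u) -> W (a :: u) u (h a).
Proof.
  intro H. pose proof (R_cons_inv _ _ H) as [O [Ru _]]. destruct a as [w|z]; simpl in *.
  - replace (inl w :: u) with (pl1 w u) by (unfold pl1; destruct (dec w v1); congruence).
    replace u with (pl1 v1 u) at 2 by (unfold pl1; destruct (dec v1 v1); congruence).
    apply lift1; auto. apply D_walk; auto. eapply nhl; eauto.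
  - replace (inr z :: u) with (pl2 z u) by (unfold pl2; destruct (dec z v2); congruence).
    replace u with (pl2 v2 u) at 2 by (unfold pl2; destruct (dec v2 v2); congruence).
    apply lift2; auto. apply D_walk; auto. eapply nhr; eauto.
Qed.

Lemma rev_snoc (P : list Lt) a t : rev (P ++ a :: t) = rev t ++ (a :: rev P).
Proof. rewrite rev_app_distr. simpl. rewrite <- app_assoc. reflexivity. Qed.

Lemma red_mid P a t : red (rev (P ++ a :: t)) -> red (a :: rev P).
Proof. rewrite rev_snoc. apply R_app_r. Qed.

Lemma descend t : forall P, red (rev (P ++ t)) -> W (rev (P ++ t)) (rev P) (ell t).
Proof.
  induction t as [|a t IH]; intros P H.
  - rewrite app_nil_r. apply W_refl.
  - assert (E : P ++ a :: t = (P ++ [a]) ++ t) by (rewrite <- app_assoc; reflexivity).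
    pose proof (red_mid _ _ _ H) as Hm.
    simpl ell. rewrite Nat.add_comm. rewrite E. apply W_trans with (rev (P ++ [a])).
    + apply IH. rewrite <- E; auto.
    + rewrite rev_app_distr. simpl. apply down; auto.
    + rewrite rev_app_distr. simpl. auto.
Qed.

Lemma exist_walk t : forall t' P, red (rev (P ++ t)) -> red (rev (P ++ t')) ->
  W (rev (P ++ t)) (rev (P ++ t')) (F t t').
Proof.
  induction t as [|a t IH]; intros t' P H H'.
  - simpl F. rewrite app_nil_r. apply W_sym, descend; auto.
  - destruct t' as [|b t'].
    + rewrite app_nil_r. apply (descend (a :: t)); auto.
    + simpl F. assert (Ra := red_mid _ _ _ H). assert (Rb := red_mid _ _ _ H').
      assert (RP : red (rev P)) by (apply R_cons_inv in Ra; apply Ra).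
      assert (Ea : P ++ a :: t = (P ++ [a]) ++ t) by (rewrite <- app_assoc; reflexivity).
      assert (Eb : P ++ b :: t' = (P ++ [b]) ++ t') by (rewrite <- app_assoc; reflexivity).
      assert (RPa : rev (P ++ [a]) = a :: rev P) by (rewrite rev_app_distr; reflexivity).
      assert (RPb : rev (P ++ [b]) = b :: rev P) by (rewrite rev_app_distr; reflexivity).
      destruct (dec a b) as [<-|n].
      * rewrite Ea, Eb. apply IH; rewrite <- app_assoc; auto.
      * assert (D1 : W (rev (P ++ a :: t)) (a :: rev P) (ell t)).
        { rewrite Ea, <- RPa. apply descend. rewrite <- Ea; auto. }
        assert (D2 : W (b :: rev P) (rev (P ++ b :: t')) (ell t')).
        { rewrite Eb, <- RPb. apply W_sym, descend. rewrite <- Eb; auto. }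
        destruct a as [w|z], b as [w'|z']; simpl dside.
        -- replace (d1 w w' + ell t + ell t')%nat with ((ell t + d1 w w') + ell t')%nat by lia.
           apply (W_trans _ (inl w' :: rev P) _ (ell t + d1 w w') (ell t')); [|exact D2|exact Rb].
           apply (W_trans _ (inl w :: rev P) _ (ell t) (d1 w w')); [exact D1|apply tile_move1; auto|exact Ra].
        -- match goal with |- W _ _ ?n => replace n with
             ((ell t + h (inl w)) + h (inr z') + ell t')%nat by (simpl; lia) end.
           apply (W_trans _ (inr z' :: rev P) _ (ell t + h (inl w) + h (inr z')) (ell t')); [|exact D2|exact Rb].
           apply (W_trans _ (rev P) _ (ell t + h (inl w)) (h (inr z'))); [|exact (W_sym _ _ _ (down _ _ Rb))|exact RP].
           apply (W_trans _ (inl w :: rev P) _ (ell t) (h (inl w))); [exact D1|exact (down _ _ Ra)|exact Ra].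
        -- match goal with |- W _ _ ?n => replace n with
             ((ell t + h (inr z)) + h (inl w') + ell t')%nat by (simpl; lia) end.
           apply (W_trans _ (inl w' :: rev P) _ (ell t + h (inr z) + h (inl w')) (ell t')); [|exact D2|exact Rb].
           apply (W_trans _ (rev P) _ (ell t + h (inr z)) (h (inl w'))); [|exact (W_sym _ _ _ (down _ _ Rb))|exact RP].
           apply (W_trans _ (inr z :: rev P) _ (ell t) (h (inr z))); [exact D1|exact (down _ _ Ra)|exact Ra].
        -- replace (d2 z z' + ell t + ell t')%nat with ((ell t + d2 z z') + ell t')%nat by lia.
           apply (W_trans _ (inr z' :: rev P) _ (ell t + d2 z z') (ell t')); [|exact D2|exact Rb].
           apply (W_trans _ (inr z :: rev P) _ (ell t) (d2 z z')); [exact D1|apply tile_move2; auto|exact Ra].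
Qed.

Lemma d1_adj a b : adj1 a b -> (d1 a b <= 1)%nat. Proof. intro; apply D_adj; auto. Qed.
Lemma d2_adj a b : adj2 a b -> (d2 a b <= 1)%nat. Proof. intro; apply D_adj; auto. Qed.

Lemma F_pre p r : F p (p ++ r) = F [] r.
Proof. rewrite <- (app_nil_r p) at 1. apply F_app. Qed.
Lemma F_pre' p r : F (p ++ r) p = F r [].
Proof. rewrite <- (app_nil_r p) at 2. apply F_app. Qed.

Lemma F_adj (x y : fp_vertex v1 v2) : FA x y -> (F (rev (proj1_sig x)) (rev (proj1_sig y)) <= 1)%nat.
Proof.
  intros [[w [w' [u [A [Ru [Nu [Px Py]]]]]]]|[w [w' [u [A [Ru [Nu [Px Py]]]]]]]].
  - destruct Px as [[-> Ex]|[Nw Ex]], Py as [[-> Ey]|[Nw' Ey]]; rewrite Ex, Ey; simpl rev.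
    + rewrite F_refl; lia.
    + rewrite F_pre. simpl. rewrite d1_sym. pose proof (d1_adj _ _ A). lia.
    + rewrite F_pre'. simpl. pose proof (d1_adj _ _ A). lia.
    + rewrite F_app. simpl. destruct (dec (@inl V1 V2 w) (inl w')); [lia|].
      simpl. pose proof (d1_adj _ _ A). lia.
  - destruct Px as [[-> Ex]|[Nw Ex]], Py as [[-> Ey]|[Nw' Ey]]; rewrite Ex, Ey; simpl rev.
    + rewrite F_refl; lia.
    + rewrite F_pre. simpl. rewrite d2_sym. pose proof (d2_adj _ _ A). lia.
    + rewrite F_pre'. simpl. pose proof (d2_adj _ _ A). lia.
    + rewrite F_app. simpl. destruct (dec (@inr V1 V2 w) (inr w')); [lia|].
      simpl. pose proof (d2_adj _ _ A). lia.
Qed.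

Lemma F_walk x y n : walk FA x y n -> (F (rev (proj1_sig x)) (rev (proj1_sig y)) <= n)%nat.
Proof.
  induction 1. rewrite F_refl; lia.
  pose proof (F_adj _ _ H). pose proof (F_tri (rev (proj1_sig x)) (rev (proj1_sig y)) (rev (proj1_sig z))). lia.
Qed.

Lemma fp_walk (x y : fp_vertex v1 v2) : walk FA x y (F (rev (proj1_sig x)) (rev (proj1_sig y))).
Proof.
  destruct x as [x Hx], y as [y Hy]. simpl.
  pose proof (exist_walk (rev x) (rev y) [] ) as E. simpl in E. rewrite !rev_involutive in E.
  apply E; auto.
Qed.

Lemma fp_dist (x y : fp_vertex v1 v2) :
  path_metric FA x y = INR (F (rev (proj1_sig x)) (rev (proj1_sig y))).
Proof.
  rewrite path_metric_D. f_equal. apply D_unique. split.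
  apply fp_walk. apply F_walk.
Qed.

Lemma sig_inj (x y : fp_vertex v1 v2) : rev (proj1_sig x) = rev (proj1_sig y) -> x = y.
Proof.
  destruct x as [x Hx], y as [y Hy]. simpl. intro E.
  assert (x = y) by (rewrite <- (rev_involutive x), <- (rev_involutive y), E; reflexivity).
  subst. f_equal. apply proof_irrelevance.
Qed.

Lemma FA_conn : connected FA.
Proof. intros x y. eexists. apply fp_walk. Qed.

Lemma main_sec : cond_strict_neg_def (path_metric adj1) -> cond_strict_neg_def (path_metric adj2) ->
  cond_strict_neg_def (path_metric FA).
Proof.
  intros cs1 cs2.
  assert (cK1 : cond_strict_neg_def K1) by exact cs1.
  assert (cK2 : cond_strict_neg_def K2) by exact cs2.
  assert (Ksym : forall x y, path_metric FA x y = path_metric FA y x).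
  { intros x y. rewrite !path_metric_D. f_equal. apply D_sym. apply FA_sym. apply FA_conn. }
  split; [exact Ksym|].
  intros lam s Ns Hout Hnz Hsum.
  set (a := fun x => fst (lam x)). set (b := fun x => snd (lam x)).
  set (ma := map (fun x => (rev (proj1_sig x), a x)) s).
  set (mb := map (fun x => (rev (proj1_sig x), b x)) s).
  set (n := list_max (map (fun x => length (proj1_sig x)) s)).
  assert (Hn : forall x, In x s -> (length (proj1_sig x) <= n)%nat).
  { intros x Hx. pose proof (proj1 (list_max_le (map (fun x => length (proj1_sig x)) s) n) (le_n _)) as Fa.
    rewrite List.Forall_forall in Fa. apply Fa. apply (in_map (fun x0 : fp_vertex v1 v2 => length (proj1_sig x0))); auto. }
  assert (G : forall (c : fp_vertex v1 v2 -> R) p,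
     In p (map (fun x => (rev (proj1_sig x), c x)) s) -> (length (fst p) <= n)%nat /\ okl (fst p)).
  { intros c p Hp. apply in_map_iff in Hp. destruct Hp as [x [<- Hx]]. simpl.
    rewrite length_rev. split; auto. destruct (proj2_sig x) as [Fx _]. unfold okl.
    apply List.Forall_rev. exact Fx. }
  assert (Ma : mass ma = 0).
  { unfold mass, ma. rewrite rs_map. simpl. apply (f_equal fst) in Hsum. rewrite csum_fst in Hsum.
    exact Hsum. }
  assert (Mb : mass mb = 0).
  { unfold mass, mb. rewrite rs_map. simpl. apply (f_equal snd) in Hsum. rewrite csum_snd in Hsum.
    exact Hsum. }
  destruct (core cK1 cK2 n ma (G a) Ma) as [Qa1 Qa2].
  destruct (core cK1 cK2 n mb (G b) Mb) as [Qb1 Qb2].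
  assert (Qm : forall c : fp_vertex v1 v2 -> R, Qf KF (map (fun x => (rev (proj1_sig x), c x)) s) =
     rs s (fun x => rs s (fun y => c x * c y * path_metric FA x y))).
  { intro c. unfold Qf. rewrite rs_map. apply rs_ext; intro x. rewrite rs_map. apply rs_ext; intro y.
    simpl. rewrite fp_dist. reflexivity. }
  exists (Qf KF ma + Qf KF mb). split.
  - destruct Hnz as [v Hv].
    assert (Iv : In v s) by (apply NNPP; intro C; apply Hv; apply Hout; auto).
    destruct (Rlt_or_le (Qf KF ma + Qf KF mb) 0) as [Lt0|Ge]; auto. exfalso.
    assert (Za : nzero ma) by (apply Qa2; lra).
    assert (Zb : nzero mb) by (apply Qb2; lra).
    assert (Dd : forall c, dens (map (fun x => (rev (proj1_sig x), c x)) s) (rev (proj1_sig v)) = c v).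
    { intro c. unfold dens. rewrite rs_map. simpl.
      transitivity (rs s (fun x => if dec x v then c x else 0)).
      - apply rs_ext; intro x. unfold dec.
        repeat match goal with |- context [excluded_middle_informative ?P] =>
          destruct (excluded_middle_informative P) end; auto; try congruence.
        exfalso. apply n0. apply sig_inj. auto.
      - apply rs_ind; auto. }
    pose proof (Za (rev (proj1_sig v))) as A0. unfold ma in A0. rewrite Dd in A0.
    pose proof (Zb (rev (proj1_sig v))) as B0. unfold mb in B0. rewrite Dd in B0.
    apply Hv. unfold a, b in *. rewrite (surjective_pairing (lam v)), A0, B0. reflexivity.
  - unfold ma, mb. rewrite !Qm. apply injective_projections.
    + rewrite csum_fst. simpl (fst (RtoC _)). rewrite <- rs2_plus.
      apply rs_ext; intro x. rewrite csum_fst. apply rs_ext; intro y. unfold a, b. simpl. ring.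
    + rewrite csum_snd. simpl (snd (RtoC _)).
      transitivity (rs s (fun x => rs s (fun y => b x * a y * path_metric FA x y)) -
                    rs s (fun x => rs s (fun y => a x * b y * path_metric FA x y))).
      * unfold Rminus. rewrite <- rs_opp, <- rs_plus. apply rs_ext; intro x. rewrite csum_snd.
        rewrite <- rs_opp, <- rs_plus. apply rs_ext; intro y. unfold a, b. simpl. ring.
      * rewrite (rs_swap s s (fun x y => a x * b y * path_metric FA x y)).
        rewrite (rs2_ext s s (fun y x => a x * b y * path_metric FA x y) (fun x y => b x * a y * path_metric FA x y)).
        ring. intros; rewrite Ksym; ring.
Qed.

End FP.

Theorem mainTheorem9 (V1 V2 : Type)
  (adj1 : V1 -> V1 -> Prop) (adj2 : V2 -> V2 -> Prop) (v1 : V1) (v2 : V2) :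
  symmetric_rel adj1 -> symmetric_rel adj2 ->
  connected adj1 -> connected adj2 ->
  cond_strict_neg_def (path_metric adj1) ->
  cond_strict_neg_def (path_metric adj2) ->
  cond_strict_neg_def (path_metric (@fp_adj V1 V2 adj1 adj2 v1 v2)).
Proof.
  intros S1 S2 C1 C2 H1 H2. apply main_sec; auto.
Qed.
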